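(* Let $\mathbb{K}$ be a field, $R=\mathbb{K}\langle x,y\rangle/(xy-1)$, $f_k=y^{k-1}x^{k-1}-y^kx^k$ and $S_k=Rf_k$ for $k\ge1$, $I=\bigoplus_{k\ge1}S_k=\langle1-yx\rangle$, and $I_0=\{x^{k-1}f_k: k\ge1\}$. Any left ideal $H$ of $R$ can be written as a direct sum of left $R$-submodules $H=\mathbb{K}[y]L\oplus Rp(x)$, where: if $H$ is not semisimple, then $p(x)$ is the unique monic polynomial in $x$ of minimal degree among nonzero polynomials in $x$ belonging to $H$, and $L=H\cap\mathrm{Span}_{\mathbb{K}}(I_0)\cap(S_1\oplus\cdots\oplus S_{\deg(p)})$; if $H$ is semisimple, then $p(x)=0$, $L=H\cap\mathrm{Span}_{\mathbb{K}}(I_0)$ and $H=\mathbb{K}[y]L$.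
   Context: $\mathbb{K}[x]$ and $\mathbb{K}[y]$ denote the subalgebras of $R$ generated by $x$ and $y$ respectively; $\mathbb{K}[y]L$ is the set of $\mathbb{K}[y]$-linear combinations of elements of $L$. *)

(* Defs.v *)
(* The Jacobson algebra R = K<x,y>/(xy - 1) is built
   concretely as the monoid algebra over K of the bicyclic monoid
   B = <x, y | xy = 1>, whose elements are the normal words y^i x^j,
   encoded as pairs (i, j) : nat * nat.  Since the monoid algebra of a
   monoid presented by <X | rel> is the free algebra K<X> modulo the
   corresponding two-sided ideal, K[B] is exactly K<x,y>/(xy - 1).     *)
From HB Require Import structures.
From mathcomp Require Import all_boot all_order all_algebra.
From mathcomp Require Import finmap.
From mathcomp.multinomials Require Import monalg.
From mathcomp Require Import zify.

Set Implicit Arguments.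
Unset Strict Implicit.
Unset Printing Implicit Defensive.

Import GRing.Theory.
Local Open Scope fset.
Local Open Scope ring_scope.

(* (i, j) stands for the word y^i x^j; x^j y^k reduces using xy = 1.     *)
Definition bone : nat * nat := (0%N, 0%N).
Definition bmul (a b : nat * nat) : nat * nat :=
  ((a.1 + (b.1 - a.2))%N, (b.2 + (a.2 - b.1))%N).

Lemma bmulA : associative bmul.
Proof.
move=> [i j] [k l] [m n]; rewrite /bmul /=; congr pair; lia.
Qed.
Lemma bmul1m : left_id bone bmul.
Proof. move=> [i j]; rewrite /bmul /=; congr pair; lia. Qed.
Lemma bmulm1 : right_id bone bmul.
Proof. move=> [i j]; rewrite /bmul /=; congr pair; lia. Qed.

Section Jacobson.
Variable (K : fieldType).

Definition jacobson : predArgType := {malg K[(nat * nat)%type]}.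
HB.instance Definition _ := GRing.Lmodule.on jacobson.

Implicit Types (g : jacobson).

Local Notation "g1 *M_[ k1 , k2 ] g2" :=
  (<< g1@_k1 * g2@_k2 *g (bmul k1 k2) >> : jacobson)
  (at level 40, no associativity).

Definition jone : jacobson := << bone >>.

Definition jmul g1 g2 : jacobson :=
  \sum_(k1 <- msupp g1) \sum_(k2 <- msupp g2) g1 *M_[k1, k2] g2.

Lemma jmulr g1 g2 :
  jmul g1 g2 = \sum_(k2 <- msupp g2) \sum_(k1 <- msupp g1) g1 *M_[k1, k2] g2.
Proof. by rewrite /jmul exchange_big. Qed.

Lemma jmullw (d1 d2 : {fset (nat * nat)}) g1 g2 :
  msupp g1 `<=` d1 -> msupp g2 `<=` d2 ->
  jmul g1 g2 = \sum_(k1 <- d1) \sum_(k2 <- d2) g1 *M_[k1, k2] g2.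
Proof.
move=> le_d1 le_d2; rewrite /jmul (big_fset_incl _ le_d1) /=.
  apply/eq_bigr=> k1 _; apply/big_fset_incl => // k _ /mcoeff_outdom ->.
  by rewrite mulr0 monalgU0.
move=> k _ /mcoeff_outdom g1k.
by rewrite big1 => // k' _; rewrite g1k mul0r monalgU0.
Qed.

Lemma jmulrw (d1 d2 : {fset (nat * nat)}) g1 g2 :
  msupp g1 `<=` d1 -> msupp g2 `<=` d2 ->
  jmul g1 g2 = \sum_(k2 <- d2) \sum_(k1 <- d1) g1 *M_[k1, k2] g2.
Proof. by move=> le_d1 le_d2; rewrite (jmullw le_d1 le_d2) exchange_big. Qed.

Lemma jmul0g : left_zero 0 jmul.
Proof. by move=> g; rewrite /jmul msupp0 big_seq_fset0. Qed.

Lemma jmulg0 : right_zero 0 jmul.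
Proof. by move=> g; rewrite jmulr msupp0 big_seq_fset0. Qed.

Lemma jmulUg c k g :
  jmul << c *g k >> g = \sum_(k' <- msupp g) << c * g@_k' *g bmul k k' >>.
Proof.
rewrite (jmullw msuppU_le (fsubset_refl _)) big_seq_fset1.
by apply/eq_bigr => k' _; rewrite mcoeffUU.
Qed.

Lemma jmulgU c k g :
  jmul g << c *g k >> = \sum_(k' <- msupp g) << g@_k' * c *g bmul k' k >>.
Proof.
rewrite (jmulrw (fsubset_refl _) msuppU_le) big_seq_fset1.
by apply/eq_bigr=> k' _; rewrite mcoeffUU.
Qed.

Lemma jmulUU c1 c2 k1 k2 :
  jmul << c1 *g k1 >> << c2 *g k2 >> = << c1 * c2 *g bmul k1 k2 >>.
Proof. by rewrite (jmulrw msuppU_le msuppU_le) !big_seq_fset1 !mcoeffUU. Qed.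

Lemma jmulEl1 g1 g2 :
  jmul g1 g2 = \sum_(k1 <- msupp g1) jmul << g1@_k1 *g k1 >> g2.
Proof. by apply/eq_bigr=> k _; rewrite jmulUg. Qed.

Lemma jmulEr1 g1 g2 :
  jmul g1 g2 = \sum_(k2 <- msupp g2) jmul g1 << g2@_k2 *g k2 >>.
Proof. by rewrite jmulr; apply/eq_bigr=> k _; rewrite jmulgU. Qed.

Lemma jmul1g : left_id jone jmul.
Proof.
move=> g; rewrite /jone jmulUg [RHS]monalgE.
by apply/eq_bigr=> kg _; rewrite mul1r bmul1m.
Qed.

Lemma jmulg1 : right_id jone jmul.
Proof.
move=> g; rewrite /jone jmulgU [RHS]monalgE.
by apply/eq_bigr=> k _; rewrite mulr1 bmulm1.
Qed.

Lemma jmulgDl : left_distributive jmul +%R.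
Proof.
move=> g1 g2 g.
rewrite [in RHS](jmullw (fsubsetUl _ (msupp g2)) (fsubset_refl _)).
rewrite [in RHS](jmullw (fsubsetUr (msupp g1) _) (fsubset_refl _)).
rewrite (jmullw (msuppD_le _ _) (fsubset_refl _)).
rewrite -big_split /=; apply/eq_bigr=> k1 _.
rewrite -big_split /=; apply/eq_bigr=> k2 _.
by rewrite mcoeffD mulrDl monalgUD.
Qed.

Lemma jmulgDr : right_distributive jmul +%R.
Proof.
move=> g g1 g2.
rewrite [in RHS](jmulrw (fsubset_refl _) (fsubsetUl _ (msupp g2))).
rewrite [in RHS](jmulrw (fsubset_refl _) (fsubsetUr (msupp g1) _)).
rewrite (jmulrw (fsubset_refl _) (msuppD_le _ _)).
rewrite -big_split /=; apply/eq_bigr => k1 _.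
rewrite -big_split /=; apply/eq_bigr => k2 _.
by rewrite mcoeffD mulrDr monalgUD.
Qed.

Lemma jmulA : associative jmul.
Proof.
move=> g1 g2 g3.
rewrite [RHS](big_morph (jmul^~ _) (fun _ _ => jmulgDl _ _ _) (jmul0g _)).
rewrite jmulEl1; apply/eq_bigr=> k1 _.
rewrite [LHS](big_morph (jmul _) (fun _ _ => jmulgDr _ _ _) (jmulg0 _)).
rewrite [RHS](big_morph (jmul^~ _) (fun _ _ => jmulgDl _ _ _) (jmul0g _)).
apply/eq_bigr=> k2 _.
rewrite [LHS](big_morph (jmul _) (fun _ _ => jmulgDr _ _ _) (jmulg0 _)).
by rewrite jmulEr1; apply/eq_bigr=> k3 _; rewrite !jmulUU mulrA bmulA.
Qed.

Lemma jone_neq0 : jone != 0.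
Proof.
apply/eqP/malgP=> /(_ bone) /eqP.
by rewrite /jone mcoeffUU mcoeff0 oner_eq0.
Qed.

HB.instance Definition _ := GRing.Zmodule_isRing.Build jacobson
  jmulA jmul1g jmulg1 jmulgDl jmulgDr jone_neq0.

End Jacobson.

Section Objects.
Variable (K : fieldType).
Local Notation R := (jacobson K).

Definition jx : R := << (1 : K) *g (0%N, 1%N) >>.
Definition jy : R := << (1 : K) *g (1%N, 0%N) >>.

Definition peval (q : {poly K}) (r : R) : R :=
  \sum_(i < size q) q`_i *: r ^+ i.

Definition fk (k : nat) : R :=
  jy ^+ k.-1 * jx ^+ k.-1 - jy ^+ k * jx ^+ k.

Definition left_ideal (H : R -> Prop) : Prop :=
  [/\ H 0, (forall a b, H a -> H b -> H (a + b))
    & (forall r a, H a -> H (r * a))].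

Definition direct_sum (H A B : R -> Prop) : Prop :=
  [/\ left_ideal A, left_ideal B,
      (forall z, A z -> B z -> z = 0)
    & (forall h, H h <-> exists a b, [/\ A a, B b & h = a + b])].

Definition semisimple (H : R -> Prop) : Prop :=
  forall N : R -> Prop, left_ideal N -> (forall r, N r -> H r) ->
  exists N' : R -> Prop, (forall r, N' r -> H r) /\ direct_sum H N N'.

Definition Rmul (a : R) : R -> Prop := fun r => exists s : R, r = s * a.

Definition Ky_span (L : R -> Prop) : R -> Prop := fun r =>
  exists (n : nat) (q : nat -> {poly K}) (l : nat -> R),
    (forall i, (i < n)%N -> L (l i)) /\
    r = \sum_(i < n) peval (q i) jy * l i.

Definition span_I0 : R -> Prop := fun r =>
  exists (n : nat) (c : nat -> K),
    r = \sum_(k < n) c k *: (jx ^+ k * fk k.+1).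

Definition sum_S (d : nat) : R -> Prop := fun r =>
  exists c : nat -> R, r = \sum_(1 <= k < d.+1) c k * fk k.

End Objects.

(* Main.v *)
Require Import Defs.
From HB Require Import structures.
From mathcomp Require Import all_boot all_order all_algebra.
From mathcomp Require Import finmap.
From mathcomp.multinomials Require Import monalg.
From mathcomp Require Import zify.
From Stdlib Require Import Classical.
Set Implicit Arguments.
Unset Strict Implicit.
Unset Printing Implicit Defensive.
Import GRing.Theory.
Local Open Scope ring_scope.


Section J.
Variable K : fieldType.
Local Notation R := (jacobson K).

Lemma mulUU (a b : K) k1 k2 :
  (<< a *g k1 >> : R) * << b *g k2 >> = << a * b *g bmul k1 k2 >>.
Proof. exact: jmulUU. Qed.

Lemma monU_scale (c : K) k : (<< c *g k >> : R) = c *: << (1:K) *g k >>.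
Proof. by apply/malgP=> k'; rewrite mcoeffZ !mcoeffU mulr_natr. Qed.

Lemma scale_sumE (a : K) (g : R) :
  a *: g = \sum_(k <- msupp g) << a * g@_k *g k >>.
Proof.
rewrite {1}(monalgE g) scaler_sumr; apply: eq_bigr => k _.
by rewrite (monU_scale (g@_k)) scalerA -monU_scale.
Qed.

Lemma CmulE (a : K) (g : R) : (<< a *g bone >> : R) * g = a *: g.
Proof.
rewrite scale_sumE; have -> : (<< a *g bone >> : R) * g = jmul << a *g bone >> g by [].
by rewrite jmulUg; apply: eq_bigr => k _; rewrite bmul1m.
Qed.

Lemma mulCE (a : K) (g : R) : g * (<< a *g bone >> : R) = a *: g.
Proof.
rewrite scale_sumE; have -> : g * (<< a *g bone >> : R) = jmul g << a *g bone >> by [].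
by rewrite jmulgU; apply: eq_bigr => k _; rewrite bmulm1 mulrC.
Qed.

Lemma jscalerAl (a : K) (u v : R) : a *: (u * v) = (a *: u) * v.
Proof. by rewrite -!CmulE mulrA. Qed.

Lemma jscalerAr (a : K) (u v : R) : a *: (u * v) = u * (a *: v).
Proof. by rewrite -!mulCE mulrA. Qed.

End J.

HB.instance Definition _ (K : fieldType) :=
  GRing.Lmodule_isLalgebra.Build K (jacobson K) (@jscalerAl K).
HB.instance Definition _ (K : fieldType) :=
  GRing.Lalgebra_isAlgebra.Build K (jacobson K) (@jscalerAr K).

Section J2.
Variable K : fieldType.
Local Notation R := (jacobson K).

Lemma pevalE (q : {poly K}) (r : R) : peval q r = horner_alg r q.
Proof.
rewrite /peval /horner_alg /horner_morph horner_coef size_map_inj_poly;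
  [|exact: fmorph_inj|by rewrite rmorph0].
by apply: eq_bigr => i _; rewrite coef_map /= mulr_algl.
Qed.
End J2.


Section B.
Variable K : fieldType.
Local Notation R := (jacobson K).
Local Notation jX := (jx K).
Local Notation jY := (jy K).
Definition je : R := 1 - jY * jX.

Lemma jone1 : (1 : R) = << (1:K) *g bone >>.
Proof. by []. Qed.

Lemma jXn n : jX ^+ n = << (1:K) *g (0%N, n) >>.
Proof.
elim: n => [|n IH]; first by rewrite expr0 jone1.
by rewrite exprS IH /jx mulUU mulr1 /bmul /=; congr << _ *g (_,_) >>; lia.
Qed.

Lemma jYn n : jY ^+ n = << (1:K) *g (n, 0%N) >>.
Proof.
elim: n => [|n IH]; first by rewrite expr0 jone1.
by rewrite exprS IH /jy mulUU mulr1 /bmul /=; congr << _ *g (_,_) >>; lia.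
Qed.

Lemma jYX i j : jY ^+ i * jX ^+ j = << (1:K) *g (i, j) >>.
Proof.
by rewrite jXn jYn mulUU mulr1 /bmul /=; congr << _ *g (_,_) >>; lia.
Qed.

Lemma jXY m n : jX ^+ m * jY ^+ n = jY ^+ (n - m) * jX ^+ (m - n).
Proof.
by rewrite jXn jYn jYX mulUU mulr1 /bmul /=; congr << _ *g (_,_) >>; lia.
Qed.

Lemma jexp (r : R) : r = \sum_(k <- msupp r) r@_k *: (jY ^+ k.1 * jX ^+ k.2).
Proof.
rewrite {1}(monalgE r); apply: eq_bigr => -[i j] _.
by rewrite jYX -monU_scale.
Qed.

Lemma jac_ind (P : R -> Prop) :
  P 0 -> (forall a b, P a -> P b -> P (a + b)) ->
  (forall (c : K) a, P a -> P (c *: a)) ->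
  (forall i j, P (jY ^+ i * jX ^+ j)) -> forall r, P r.
Proof.
move=> P0 PD PZ Pm r; rewrite (jexp r).
by elim/big_ind: _ => // k _; apply: PZ.
Qed.

Lemma jXY1 : jX * jY = 1.
Proof. by have := jXY 1 1; rewrite !expr1 !subnn !expr0 mulr1. Qed.

Lemma jXe : jX * je = 0.
Proof. by rewrite /je mulrBr mulr1 mulrA jXY1 mul1r subrr. Qed.

Lemma jeY : je * jY = 0.
Proof. by rewrite /je mulrBl mul1r -mulrA jXY1 mulr1 subrr. Qed.

Lemma jee : je * je = je.
Proof. by rewrite {2}/je mulrBr mulr1 mulrA jeY mul0r subr0. Qed.

Lemma jXne n : (0 < n)%N -> jX ^+ n * je = 0.
Proof. by case: n => // n _; rewrite exprSr -mulrA jXe mulr0. Qed.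

Lemma jeYn n : (0 < n)%N -> je * jY ^+ n = 0.
Proof. by case: n => // n _; rewrite exprS mulrA jeY mul0r. Qed.

Lemma je00 : je@_bone = 1.
Proof.
rewrite /je jone1 -[jY]expr1 -[jX]expr1 (jYX 1 1) mcoeffB !mcoeffU /bone.
by rewrite eqxx (_ : ((1,1) == (0,0))%N = false) // subr0.
Qed.

Lemma je_neq0 : je != 0.
Proof. by apply/eqP => h; have := je00; rewrite h mcoeff0 => /eqP; rewrite eq_sym oner_eq0. Qed.

Lemma jeXYe i j : je * jX ^+ j * jY ^+ i * je = if i == j then je else 0.
Proof.
rewrite -(mulrA je) jXY mulrA; case: (ltngtP i j) => h.
- have -> : (i - j = 0)%N by lia.
  by rewrite expr0 mulr1 -mulrA jXne ?mulr0 // subn_gt0.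
- have -> : (j - i = 0)%N by lia.
  by rewrite expr0 mulr1 jeYn ?mul0r // subn_gt0.
- by rewrite h subnn !expr0 !mulr1 jee.
Qed.

Lemma jeXY i j : je * jX ^+ j * jY ^+ i = if (i <= j)%N then je * jX ^+ (j - i) else 0.
Proof.
rewrite -(mulrA je) jXY mulrA; case: leqP => h.
- have -> : (i - j = 0)%N by lia.
  by rewrite expr0 mulr1.
- by rewrite jeYn ?mul0r // subn_gt0.
Qed.

Lemma jeYX i j : je * (jY ^+ i * jX ^+ j) = if i == 0%N then je * jX ^+ j else 0.
Proof.
case: i => [|i]; first by rewrite expr0 mul1r.
by rewrite mulrA jeYn // mul0r.
Qed.

Lemma jtele1 m :
  1 = jY ^+ m * jX ^+ m + \sum_(0 <= k < m) jY ^+ k * je * jX ^+ k.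
Proof.
elim: m => [|m IH]; first by rewrite big_geq // addr0 !expr0 mulr1.
have E : jY ^+ m * jX ^+ m = jY ^+ m.+1 * jX ^+ m.+1 + jY ^+ m * je * jX ^+ m.
  rewrite /je mulrBr mulrBl (mulr1 (jY ^+ m)) exprSr exprS !mulrA.
  by rewrite addrC subrK.
rewrite {1}IH big_nat_recr //= E -addrA.
by rewrite [X in _ + X = _]addrC.
Qed.

Lemma jtele m (h : R) :
  h = jY ^+ m * (jX ^+ m * h) + \sum_(k < m) jY ^+ k * (je * (jX ^+ k * h)).
Proof.
rewrite -{1}(mul1r h) {1}(jtele1 m) mulrDl mulr_suml big_mkord -mulrA.
by under eq_bigr do rewrite -!mulrA.
Qed.

End B.


Section C.
Variable K : fieldType.
Local Notation R := (jacobson K).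
Local Notation jX := (jx K).
Local Notation jY := (jy K).
Local Notation je := (je K).

Lemma peval0 (r : R) : peval 0 r = 0.
Proof. rewrite pevalE rmorph0; reflexivity. Qed.
Lemma pevalD (p q : {poly K}) (r : R) : peval (p + q) r = peval p r + peval q r.
Proof. rewrite !pevalE rmorphD; reflexivity. Qed.
Lemma pevalB (p q : {poly K}) (r : R) : peval (p - q) r = peval p r - peval q r.
Proof. rewrite !pevalE rmorphB; reflexivity. Qed.
Lemma pevalZ (c : K) (q : {poly K}) (r : R) : peval (c *: q) r = c *: peval q r.
Proof. rewrite !pevalE linearZ /= mulr_algl; reflexivity. Qed.
Lemma pevalM (p q : {poly K}) (r : R) : peval (p * q) r = peval p r * peval q r.
Proof. rewrite !pevalE rmorphM; reflexivity. Qed.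
Lemma pevalXn n (r : R) : peval 'X^n r = r ^+ n.
Proof. by rewrite pevalE rmorphXn /= horner_algX. Qed.
Lemma peval1 (r : R) : peval 1 r = 1.
Proof. rewrite pevalE rmorph1; reflexivity. Qed.

Lemma row_proj (r : R) : exists a : {poly K}, je * r = je * peval a jX.
Proof.
elim/jac_ind: r.
- by exists 0; rewrite peval0 !mulr0.
- move=> a b [pa ha] [pb hb]; exists (pa + pb).
  by rewrite mulrDr ha hb pevalD mulrDr.
- move=> c a [pa ha]; exists (c *: pa).
  by rewrite pevalZ -!scalerAr ha.
- move=> i j; rewrite jeYX; case: eqP => _.
  + by exists 'X^j; rewrite pevalXn.
  + by exists 0; rewrite peval0 mulr0.
Qed.

Lemma KL (b : {poly K}) :
  je * peval b jX * jY ^+ (size b).-1 = lead_coef b *: je.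
Proof.
case sb: (size b) => [|n].
  by move/eqP: sb; rewrite size_poly_eq0 => /eqP ->; rewrite peval0 mulr0 mul0r lead_coef0 scale0r.
rewrite /peval sb mulr_sumr mulr_suml big_ord_recr /= big1 ?add0r.
  by rewrite -scalerAr -scalerAl jeXY leqnn subnn expr0 mulr1 lead_coefE sb.
move=> i _; rewrite -scalerAr -scalerAl jeXY.
by case: leqP => h; [have := ltn_ord i; lia | rewrite scaler0].
Qed.

Lemma KL2 (b : {poly K}) d : je * peval b jX * jY ^+ d = 0 -> (size b <= d)%N.
Proof.
move=> h; rewrite leqNgt; apply/negP => hd.
have := KL b; have -> : (size b).-1 = (d + ((size b).-1 - d))%N by lia.
rewrite exprD mulrA h mul0r => /esym /eqP; rewrite scaler_eq0 (negbTE (je_neq0 K)) orbF.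
rewrite lead_coef_eq0 -size_poly_eq0; lia.
Qed.

Lemma xpush (h : R) : exists m0, forall m, (m0 <= m)%N -> exists a : {poly K}, jX ^+ m * h = peval a jX.
Proof.
elim/jac_ind: h.
- by exists 0%N => m _; exists 0; rewrite peval0 mulr0.
- move=> a b [ma ha] [mb hb]; exists (maxn ma mb) => m hm.
  have [pa ea] := ha m (leq_trans (leq_maxl _ _) hm).
  have [pb eb] := hb m (leq_trans (leq_maxr _ _) hm).
  by exists (pa + pb); rewrite mulrDr ea eb pevalD.
- move=> c a [ma ha]; exists ma => m hm; have [pa ea] := ha m hm.
  by exists (c *: pa); rewrite pevalZ -scalerAr ea.
- move=> i j; exists i => m hm; exists 'X^(m - i + j).
  rewrite pevalXn mulrA jXY; have -> : (i - m = 0)%N by lia.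
  by rewrite expr0 mul1r -exprD.
Qed.

Definition ycol (t : R) := exists h : {poly K}, t = peval h jY * je.

Lemma ycol0 : ycol 0.
Proof. by exists 0; rewrite peval0 mul0r. Qed.
Lemma ycolD a b : ycol a -> ycol b -> ycol (a + b).
Proof. by move=> [p ->] [q ->]; exists (p + q); rewrite pevalD mulrDl. Qed.
Lemma ycolZ (c : K) a : ycol a -> ycol (c *: a).
Proof. by move=> [p ->]; exists (c *: p); rewrite pevalZ scalerAl. Qed.
Lemma ycol_sum (I : Type) (s : seq I) (F : I -> R) :
  (forall i, ycol (F i)) -> ycol (\sum_(i <- s) F i).
Proof. by move=> h; elim/big_ind: _ => //; [exact: ycol0 | exact: ycolD]. Qed.

Lemma ycol_mul (r : R) (g : {poly K}) : ycol (r * peval g jY * je).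
Proof.
elim/jac_ind: r.
- by rewrite !mul0r; exact: ycol0.
- by move=> a b ha hb; rewrite !mulrDl; exact: ycolD.
- by move=> c a ha; rewrite -!scalerAl; exact: ycolZ.
- move=> i j; rewrite /peval mulr_sumr mulr_suml; apply: ycol_sum => k.
  rewrite -scalerAr -scalerAl; apply: ycolZ.
  rewrite -!mulrA (mulrA (jX ^+ j)) jXY.
  case: (leqP j k) => hk.
  + have -> : (j - k = 0)%N by lia.
    by rewrite expr0 mulr1 mulrA -exprD; exists 'X^(i + (k - j)); rewrite pevalXn.
  + by rewrite -mulrA jXne ?mulr0 ?subn_gt0 //; exact: ycol0.
Qed.

End C.


Lemma ex_min_prop (Q : nat -> Prop) :
  (exists n, Q n) -> exists n, Q n /\ forall m, Q m -> (n <= m)%N.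
Proof.
move=> [n Qn].
have: forall N n, (n <= N)%N -> Q n -> exists n, Q n /\ forall m, Q m -> (n <= m)%N.
  elim=> [|N IH] k hk Qk.
    by exists k; split=> // m _; lia.
  case: (classic (exists m, Q m /\ (m < k)%N)) => [[m [Qm hm]]|hno].
    by apply: (IH m) => //; lia.
  exists k; split=> // m Qm; rewrite leqNgt; apply/negP => h; apply: hno; by exists m.
by move/(_ n n (leqnn n) Qn).
Qed.

Section D.
Variable K : fieldType.
Local Notation R := (jacobson K).
Local Notation jX := (jx K).
Local Notation jY := (jy K).
Local Notation je := (je K).

Section LI.
Variable H : R -> Prop.
Hypothesis hH : left_ideal H.

Lemma li0 : H 0. Proof. by case: hH. Qed.
Lemma liD a b : H a -> H b -> H (a + b). Proof. by case: hH => _ h _; apply: h. Qed.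
Lemma liM r a : H a -> H (r * a). Proof. by case: hH => _ _ h; apply: h. Qed.
Lemma liZ (c : K) a : H a -> H (c *: a).
Proof. by move=> ha; rewrite -[a]mul1r scalerAl; apply: liM. Qed.
Lemma liN a : H a -> H (- a).
Proof. by move=> ha; rewrite -scaleN1r; apply: liZ. Qed.
Lemma liB a b : H a -> H b -> H (a - b).
Proof. by move=> ha hb; apply: liD => //; apply: liN. Qed.
Lemma li_sum (I : Type) (s : seq I) (F : I -> R) :
  (forall i, H (F i)) -> H (\sum_(i <- s) F i).
Proof. by move=> h; elim/big_ind: _ => //; [exact: li0 | exact: liD]. Qed.
End LI.

Lemma fkE k : fk K k.+1 = jY ^+ k * je * jX ^+ k.
Proof.
rewrite /fk /= /je mulrBr mulrBl (mulr1 (jY ^+ k)) exprSr exprS !mulrA.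
by [].
Qed.

Lemma xfk k : jX ^+ k * fk K k.+1 = je * jX ^+ k.
Proof.
by rewrite fkE !mulrA jXY subnn !expr0 !mul1r.
Qed.

Lemma span_I0_row (a : {poly K}) : span_I0 (je * peval a jX).
Proof.
exists (size a), (fun k => a`_k).
rewrite /peval mulr_sumr; apply: eq_bigr => i _.
by rewrite xfk scalerAr.
Qed.

Lemma span_I0_fix l : span_I0 l -> je * l = l.
Proof.
move=> [n [c ->]]; rewrite mulr_sumr; apply: eq_bigr => i _.
by rewrite -scalerAr xfk mulrA jee.
Qed.

Lemma pevalW (q : {poly K}) (r : R) n : (size q <= n)%N ->
  peval q r = \sum_(i < n) q`_i *: r ^+ i.
Proof.
move=> h; rewrite pevalE /horner_alg /horner_morph (horner_coef_wide _ (n:=n)).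
  by apply: eq_bigr => i _; rewrite coef_map /= mulr_algl.
by rewrite size_map_inj_poly //; [exact: fmorph_inj | rewrite rmorph0].
Qed.

Lemma sum_S_row (a : {poly K}) d : (size a <= d)%N -> sum_S d (je * peval a jX).
Proof.
move=> h; exists (fun k => a`_k.-1 *: jX ^+ k.-1).
rewrite (pevalW _ h) big_add1 /= big_mkord mulr_sumr; apply: eq_bigr => i _.
by rewrite -scalerAl xfk scalerAr.
Qed.

Lemma sum_S_kill d l : sum_S d l -> l * jY ^+ d = 0.
Proof.
move=> [c ->]; rewrite mulr_suml big_nat big1 // => k /andP [h1 h2].
case: k h1 h2 => // k _ hk; rewrite fkE -!mulrA (mulrA je) jeXY.
by case: leqP => h; [lia | rewrite !mulr0].
Qed.

Lemma Ky0 (L : R -> Prop) : Ky_span L 0.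
Proof. by exists 0%N, (fun _ => 0 : {poly K}), (fun _ => 0 : R); split => //; rewrite big_ord0. Qed.

Lemma Ky1 (L : R -> Prop) g l : L l -> Ky_span L (peval g jY * l).
Proof.
move=> hl; exists 1%N, (fun _ => g), (fun _ => l); split => //.
by rewrite big_ord1.
Qed.

Lemma KyD (L : R -> Prop) a b : Ky_span L a -> Ky_span L b -> Ky_span L (a + b).
Proof.
move=> [n1 [q1 [l1 [h1 ->]]]] [n2 [q2 [l2 [h2 ->]]]].
exists (n1 + n2)%N, (fun t => if (t < n1)%N then q1 t else q2 (t - n1)%N),
  (fun t => if (t < n1)%N then l1 t else l2 (t - n1)%N); split.
  by move=> i hi; case: ifP => h; [apply: h1 | apply: h2; lia].
rewrite big_split_ord /=; congr (_ + _); apply: eq_bigr => i _ /=.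
  by rewrite ltn_ord.
by rewrite ltnNge leq_addr /= addKn.
Qed.

Lemma Ky_sum (L : R -> Prop) (I : Type) (s : seq I) (F : I -> R) :
  (forall i, Ky_span L (F i)) -> Ky_span L (\sum_(i <- s) F i).
Proof. by move=> h; elim/big_ind: _ => //; [exact: Ky0 | exact: KyD]. Qed.

Lemma Ky_sub (H L : R -> Prop) : left_ideal H -> (forall r, L r -> H r) ->
  forall r, Ky_span L r -> H r.
Proof.
move=> hH hL r [n [q [l [hl ->]]]].
apply: li_sum => // i; apply: liM => //; apply: hL; exact: hl.
Qed.

End D.


Section E.
Variable K : fieldType.
Local Notation R := (jacobson K).
Local Notation jX := (jx K).
Local Notation jY := (jy K).
Local Notation je := (je K).

Variable H : R -> Prop.
Hypothesis hH : left_ideal H.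
Hypothesis hP : forall q : {poly K}, q != 0 -> ~ H (peval q jX).

Lemma c2_row h : H h -> exists m, h = \sum_(k < m) jY ^+ k * (je * (jX ^+ k * h)).
Proof.
move=> Hh; have [m0 hm] := xpush h; have [a ea] := hm m0 (leqnn _).
exists m0; rewrite {1}(jtele m0 h) ea.
have -> : a = 0.
  apply/eqP; apply/negP => /negP a0; apply: (hP a0); rewrite -ea; exact: liM.
by rewrite peval0 mulr0 add0r.
Qed.

Lemma c2_eq h : H h <-> Ky_span (fun r => H r /\ span_I0 r) h.
Proof.
split.
  move=> Hh; have [m em] := c2_row Hh.
  exists m, (fun i => 'X^i), (fun i => je * (jX ^+ i * h)); split.
    move=> i _; split; first by apply: liM => //; apply: liM.
    by have [a ->] := row_proj (jX ^+ i * h); apply: span_I0_row.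
  by rewrite {1}em; apply: eq_bigr => i _; rewrite pevalXn.
by apply: Ky_sub => // r [].
Qed.

End E.


Section E2.
Variable K : fieldType.
Local Notation R := (jacobson K).
Local Notation jX := (jx K).
Local Notation jY := (jy K).
Local Notation je := (je K).

Definition UG (G : R -> Prop) (a : {poly K}) := G (je * peval a jX).

Lemma UG0 G : left_ideal G -> UG G 0.
Proof. by move=> hG; rewrite /UG peval0 mulr0; exact: li0. Qed.
Lemma UGD G a b : left_ideal G -> UG G a -> UG G b -> UG G (a + b).
Proof. by move=> hG ha hb; rewrite /UG pevalD mulrDr; exact: liD. Qed.
Lemma UGZ G (c : K) a : left_ideal G -> UG G a -> UG G (c *: a).
Proof. by move=> hG ha; rewrite /UG pevalZ -scalerAr; exact: liZ. Qed.

Variable H : R -> Prop.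
Hypothesis hH : left_ideal H.
Variable N : R -> Prop.
Hypothesis hN : left_ideal N.
Hypothesis hNH : forall r, N r -> H r.

Definition Dg n := exists u, UG N u /\ size u = n.+1.
Definition U' a := UG H a /\ forall n, Dg n -> a`_n = 0.

Lemma U'0 : U' 0.
Proof. by split; [exact: UG0 | move=> n _; rewrite coef0]. Qed.
Lemma U'D a b : U' a -> U' b -> U' (a + b).
Proof.
move=> [ha ha'] [hb hb']; split; first exact: UGD.
by move=> n hn; rewrite coefD ha' ?hb' ?addr0.
Qed.
Lemma U'Z (c : K) a : U' a -> U' (c *: a).
Proof.
move=> [ha ha']; split; first exact: UGZ.
by move=> n hn; rewrite coefZ ha' ?mulr0.
Qed.

Lemma compl a : UG H a -> exists u w, [/\ UG N u, U' w & a = u + w].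
Proof.
have main : forall b a, UG H a -> (forall n, Dg n -> (b <= n)%N -> a`_n = 0) ->
    exists u w, [/\ UG N u, U' w & a = u + w].
  elim=> [|b IH] {}a Ha hyp.
    exists 0, a; split; [exact: UG0 | | by rewrite add0r].
    by split => // n hn; apply: hyp.
  case: (classic (Dg b)) => [[u0 [Uu0 su0]] | nD].
    have ub : u0`_b != 0.
      have -> : b = (size u0).-1 by rewrite su0.
      by rewrite -lead_coefE lead_coef_eq0 -size_poly_eq0 su0.
    set c := a`_b / u0`_b.
    have hyp' : forall n, Dg n -> (b <= n)%N -> (a + (- c) *: u0)`_n = 0.
      move=> n hn hbn; rewrite coefD coefZ.
      case: (ltngtP b n) => h.
      - have hs : (size u0 <= n)%N by rewrite su0.
        by rewrite hyp // [u0`_n]nth_default // mulr0 addr0.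
      - lia.
      - by subst n; rewrite /c mulNr divfK // subrr.
    have [u [w [Uu Uw e]]] := IH (a + (- c) *: u0) (UGD hH Ha (UGZ (- c) hH (hNH Uu0))) hyp'.
    exists (u + c *: u0), w; split => //; first by apply: UGD => //; apply: UGZ.
    by rewrite addrAC -e scaleNr subrK.
  apply: IH => // n hn hbn; case: (ltngtP b n) => h.
  - by apply: hyp.
  - lia.
  - by subst n.
move=> Ha; apply: (main (size a)) => // n _ hn; exact: nth_default.
Qed.
Hypothesis hP : forall q : {poly K}, q != 0 -> ~ H (peval q jX).

Definition Qs t := exists a, U' a /\ t = je * peval a jX.
Definition N' r := H r /\ forall i, Qs (je * (jX ^+ i * r)).

Lemma Qs0 : Qs 0.
Proof. by exists 0; split; [exact: U'0 | rewrite peval0 mulr0]. Qed.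
Lemma QsD a b : Qs a -> Qs b -> Qs (a + b).
Proof. by move=> [p [hp ->]] [q [hq ->]]; exists (p + q); split; [exact: U'D | rewrite pevalD mulrDr]. Qed.
Lemma QsZ (c : K) a : Qs a -> Qs (c *: a).
Proof. by move=> [p [hp ->]]; exists (c *: p); split; [exact: U'Z | rewrite pevalZ scalerAr]. Qed.
Lemma Qs_sum (I : Type) (s : seq I) (F : I -> R) :
  (forall i, Qs (F i)) -> Qs (\sum_(i <- s) F i).
Proof. by move=> h; elim/big_ind: _ => //; [exact: Qs0 | exact: QsD]. Qed.

Lemma N'_li : left_ideal N'.
Proof.
split.
- split; first exact: li0.
  by move=> i; rewrite !mulr0; exact: Qs0.
- move=> a b [Ha ra] [Hb rb]; split; first exact: liD.
  by move=> i; rewrite !mulrDr; apply: QsD.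
- move=> r a [Ha ra]; split; first exact: liM.
  move=> i; rewrite (mulrA (jX ^+ i)) (mulrA je); have [c ->] := row_proj (jX ^+ i * r).
  rewrite /peval mulr_sumr mulr_suml; apply: Qs_sum => j.
  by rewrite -scalerAr -scalerAl -mulrA; apply: QsZ.
Qed.

Lemma N'_int z : N z -> N' z -> z = 0.
Proof.
move=> Nz [Hz rz]; have [m ->] := c2_row hH hP Hz.
apply: big1 => k _; have [a [[Ua Da] ea]] := rz k.
suff a0 : a = 0 by rewrite ea a0 peval0 !mulr0.
apply/eqP; apply/negP => /negP a0.
have : a`_(size a).-1 = 0.
  apply: Da; exists a; split.
    by rewrite /UG -ea; apply: liM => //; apply: liM.
  by rewrite prednK // lt0n size_poly_eq0.
by move/eqP; rewrite -lead_coefE lead_coef_eq0; apply/negP.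
Qed.

Definition ABs2 t := exists a b, [/\ N a, N' b & t = a + b].

Lemma N'_cover h : H h -> ABs2 h.
Proof.
move=> Hh; have [m ->] := c2_row hH hP Hh.
elim/big_ind: _.
- by exists 0, 0; split; [exact: li0 | exact: (li0 N'_li) | rewrite addr0].
- move=> t1 t2 [a1 [b1 [h1 h1' ->]]] [a2 [b2 [h2 h2' ->]]].
  exists (a1 + a2), (b1 + b2); split; [exact: liD | exact: (liD N'_li) | ].
  by rewrite addrACA.
move=> k _; have [c ec] := row_proj (jX ^+ k * h).
have Hc : UG H c by rewrite /UG -ec; apply: liM => //; apply: liM.
have [u [w [Uu Uw ecw]]] := compl Hc.
exists (jY ^+ k * (je * peval u jX)), (jY ^+ k * (je * peval w jX)); split.
- exact: liM.
- split; first by apply: liM => //; case: Uw.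
  move=> i; rewrite !mulrA jeXYe; case: eqP => _.
  + by exists w.
  + by rewrite !mul0r; exact: Qs0.
- by rewrite ec ecw pevalD mulrDr mulrDr.
Qed.

End E2.

Lemma c2_ss (K : fieldType) (H : jacobson K -> Prop) : left_ideal H ->
  (forall q : {poly K}, q != 0 -> ~ H (peval q (jx K))) -> semisimple H.
Proof.
move=> hH hP N hN hNH; exists (N' H N); split; first by move=> r [].
split; [exact: hN | exact: N'_li | | ].
  by move=> z Nz N'z; apply: (N'_int hH hN hP Nz N'z).
move=> h; split; first exact: (N'_cover hH hN hNH hP).
by move=> [a [b [Na [Hb _] ->]]]; apply: liD => //; apply: hNH.
Qed.


Section F.
Variable K : fieldType.
Local Notation R := (jacobson K).
Local Notation jX := (jx K).
Local Notation jY := (jy K).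
Local Notation je := (je K).

Lemma xcomm k (b : {poly K}) : jX ^+ k * peval b jX = peval b jX * jX ^+ k.
Proof. by rewrite -pevalXn -!pevalM mulrC. Qed.

Definition ABs (A B : R -> Prop) t := exists a b, [/\ A a, B b & t = a + b].

Lemma ABsD (A B : R -> Prop) t1 t2 :
  (forall a1 a2, A a1 -> A a2 -> A (a1 + a2)) ->
  (forall b1 b2, B b1 -> B b2 -> B (b1 + b2)) ->
  ABs A B t1 -> ABs A B t2 -> ABs A B (t1 + t2).
Proof.
move=> AD BD [a1 [b1 [h1 h1' ->]]] [a2 [b2 [h2 h2' ->]]].
exists (a1 + a2), (b1 + b2); split; [exact: AD | exact: BD | by rewrite addrACA].
Qed.

Lemma ABs_sum (A B : R -> Prop) (I : Type) (s : seq I) (F : I -> R) :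
  A 0 -> B 0 ->
  (forall a1 a2, A a1 -> A a2 -> A (a1 + a2)) ->
  (forall b1 b2, B b1 -> B b2 -> B (b1 + b2)) ->
  (forall i, ABs A B (F i)) -> ABs A B (\sum_(i <- s) F i).
Proof.
move=> A0 B0 AD BD h; apply: (big_ind (ABs A B)) => //.
  by exists 0, 0; split => //; rewrite addr0.
by move=> x y; apply: ABsD.
Qed.

Definition Iset (a : R) := exists M0, forall M, (M0 <= M)%N -> jX ^+ M * a = 0.

Lemma Iset_li : left_ideal Iset.
Proof.
split.
- by exists 0%N => M _; rewrite mulr0.
- move=> a b [Ma ha] [Mb hb]; exists (maxn Ma Mb) => M hM.
  by rewrite mulrDr ha ?hb ?addr0 //; [apply: leq_trans hM; apply: leq_maxr | apply: leq_trans hM; apply: leq_maxl].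
- move=> r a [Ma ha]; have [m0 hm] := xpush r; exists (m0 + Ma)%N => M hM.
  have [b eb] := hm m0 (leqnn _).
  have -> : M = ((M - m0) + m0)%N by lia.
  rewrite exprD -mulrA (mulrA (jX ^+ m0)) eb mulrA xcomm -mulrA ha ?mulr0 //; lia.
Qed.

Variable H : R -> Prop.
Hypothesis hH : left_ideal H.
Variable p : {poly K}.
Hypothesis pmon : p \is monic.
Hypothesis Hp : H (peval p jX).
Hypothesis hmin : forall q : {poly K}, q != 0 -> H (peval q jX) -> (size p <= size q)%N.

Lemma p_neq0 : p != 0. Proof. exact: monic_neq0. Qed.

Lemma F1 a : H (peval a jX) -> peval a jX = peval (a %/ p) jX * peval p jX.
Proof.
move=> Ha; have e := divp_eq a p.
suff r0 : a %% p = 0 by rewrite {1}e r0 addr0 pevalM.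
apply/eqP; apply/negP => /negP r0.
have : H (peval (a %% p) jX).
  have -> : a %% p = a - (a %/ p) * p by rewrite {2}e addrAC subrr add0r.
  by rewrite pevalB pevalM; apply: liB => //; apply: liM.
move/(hmin r0); rewrite leqNgt ltn_modpN0 //; exact: p_neq0.
Qed.

Lemma notss : ~ semisimple H.
Proof.
move=> SS; set q := peval p jX.
pose N := fun r => exists a, Iset a /\ r = a * q.
have hN : left_ideal N.
  split.
  - by exists 0; split; [exact: (li0 Iset_li) | rewrite mul0r].
  - move=> _ _ [a [Ia ->]] [b [Ib ->]]; exists (a + b); split; last by rewrite mulrDl.
    exact: (liD Iset_li).
  - move=> r _ [a [Ia ->]]; exists (r * a); split; last by rewrite mulrA.
    exact: (liM Iset_li).
have hNH : forall r, N r -> H r by move=> _ [a [_ ->]]; apply: liM.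
have [N' [_ [_ hN' hint hcov]]] := SS N hN hNH.
have [n [n' [[a [[M0 hM0] ->]] N'n e]]] := (hcov q).1 Hp.
pose g := jY ^+ M0 * je * jX ^+ M0.
have Ig : Iset g.
  exists M0.+1 => M hM; rewrite /g !mulrA jXY.
  have -> : (M0 - M = 0)%N by lia.
  by rewrite expr0 mul1r jXne ?mul0r //; lia.
have ga : g * a = 0 by rewrite /g -mulrA hM0 ?mulr0.
have gq : g * q = g * n' by rewrite {1}e mulrDr mulrA ga mul0r add0r.
have : g * q = 0.
  apply: hint; first by exists g.
  by rewrite gq; apply: (liM hN').
move/(congr1 (fun t => jX ^+ M0 * t)); rewrite mulr0 /g !mulrA jXY subnn !expr0 !mul1r.
rewrite -mulrA -pevalXn -pevalM => h0.
have := KL2 (d := 0%N) (b := 'X^M0 * p); rewrite expr0 mulr1 => /(_ h0).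
rewrite leqn0 size_poly_eq0 mulf_eq0 (negbTE p_neq0) orbF.
by rewrite -size_poly_eq0 size_polyXn.
Qed.


Local Notation d := (size p).-1.
Definition L1 (r : R) := [/\ H r, span_I0 r & sum_S d r].

Lemma kill c : je * peval (c * p) jX * jY ^+ d = 0 -> c = 0.
Proof.
move/KL2 => h; case: (eqVneq c 0) => // c0; exfalso.
move: h; rewrite size_mul //; last exact: p_neq0.
rewrite -!subn1.
have : (0 < size c)%N by rewrite lt0n size_poly_eq0.
have : (0 < size p)%N by rewrite lt0n size_poly_eq0 p_neq0.
move: (size c) (size p) => sc sp; lia.
Qed.

Lemma F3cover h : H h -> ABs (Ky_span L1) (Rmul (peval p jX)) h.
Proof.
move=> Hh.
have [m0 hm] := xpush h; have [a ea] := hm m0 (leqnn _).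
have Ha : H (peval a jX) by rewrite -ea; apply: liM.
rewrite (jtele m0 h) ea (F1 Ha).
have A0 : Ky_span L1 0 := Ky0 _.
have B0 : Rmul (peval p jX) 0 by exists 0; rewrite mul0r.
have BD : forall b1 b2, Rmul (peval p jX) b1 -> Rmul (peval p jX) b2 -> Rmul (peval p jX) (b1 + b2).
  by move=> _ _ [s1 ->] [s2 ->]; exists (s1 + s2); rewrite mulrDl.
have AD := @KyD K L1.
apply: ABsD => //.
  exists 0, (jY ^+ m0 * peval (a %/ p) jX * peval p jX); split => //; first by eexists.
  by rewrite add0r mulrA.
apply: ABs_sum => // k.
have [c ec] := row_proj (jX ^+ k * h).
have Hc : H (je * peval c jX) by rewrite -ec; apply: liM => //; apply: liM.
have ec2 : je * peval c jX = je * peval (c %/ p) jX * peval p jX + je * peval (c %% p) jX.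
  by rewrite {1}(divp_eq c p) pevalD pevalM mulrDr mulrA.
have L1r : L1 (je * peval (c %% p) jX).
  split.
  - have -> : je * peval (c %% p) jX = je * peval c jX - je * peval (c %/ p) jX * peval p jX
      by rewrite ec2 addrAC subrr add0r.
    by apply: liB => //; apply: liM.
  - exact: span_I0_row.
  - apply: sum_S_row; have hs := ltn_modpN0 c p_neq0; by rewrite -ltnS (ltn_predK hs).
exists (peval 'X^k jY * (je * peval (c %% p) jX)), (jY ^+ k * (je * peval (c %/ p) jX) * peval p jX).
split; [exact: Ky1 | by eexists | ].
rewrite ec ec2 mulrDr pevalXn addrC !mulrA.
reflexivity.
Qed.

Lemma F3 : direct_sum H (Ky_span L1) (Rmul (peval p jX)).
Proof.
set q := peval p jX.
have L1H : forall r, L1 r -> H r by move=> r [].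
split.
- split; [exact: Ky0 | exact: KyD | ].
  move=> r _ [n [qq [l [hl ->]]]]; rewrite mulr_sumr; apply: Ky_sum => i.
  have [Hl Sl _] := hl i (ltn_ord i).
  rewrite -(span_I0_fix Sl) !mulrA; have [h ->] := ycol_mul r (qq i).
  by rewrite -mulrA (span_I0_fix Sl); apply: Ky1; apply: hl.
- split.
  + by exists 0; rewrite mul0r.
  + by move=> _ _ [s ->] [t ->]; exists (s + t); rewrite mulrDl.
  + by move=> r _ [s ->]; exists (r * s); rewrite mulrA.
- move=> z [n [qq [l [hl ez]]]] [s es].
  have zy : z * jY ^+ d = 0.
    rewrite ez mulr_suml big1 // => i _.
    have [_ _ Sl] := hl i (ltn_ord i).
    by rewrite -mulrA sum_S_kill ?mulr0.
  have [m0 hm] := xpush s; have [b eb] := hm m0 (leqnn _).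
  rewrite (jtele m0 z) big1 ?addr0.
    have -> : jX ^+ m0 * z = peval (b * p) jX by rewrite es mulrA eb pevalM.
    suff -> : b = 0 by rewrite mul0r peval0 mulr0.
    apply: kill; rewrite -mulrA.
    have -> : peval (b * p) jX = jX ^+ m0 * z by rewrite es mulrA eb pevalM.
    by rewrite -mulrA zy !mulr0.
  move=> k _; have [c ec] := row_proj (jX ^+ k * s).
  have -> : je * (jX ^+ k * z) = je * peval (c * p) jX
    by rewrite es (mulrA (jX ^+ k)) (mulrA je) ec pevalM mulrA.
  suff -> : c = 0 by rewrite mul0r peval0 !mulr0.
  apply: kill.
  have <- : je * (jX ^+ k * z) = je * peval (c * p) jX
    by rewrite es (mulrA (jX ^+ k)) (mulrA je) ec pevalM mulrA.
  by rewrite -!mulrA zy !mulr0.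
- move=> h; split; last first.
    move=> [a [b [Aa [s ->] ->]]]; apply: liD => //; last exact: liM.
    exact: Ky_sub Aa.
  exact: F3cover.
Qed.

End F.


Theorem corollary3 (K : fieldType) (H : jacobson K -> Prop) :
  left_ideal H ->
  (~ semisimple H ->
     exists p : {poly K},
       [/\ p \is monic,
           H (peval p (jx K)),
           (forall q : {poly K}, q != 0 -> H (peval q (jx K)) ->
              (size p <= size q)%N),
           (forall p' : {poly K}, p' \is monic -> H (peval p' (jx K)) ->
              (forall q : {poly K}, q != 0 -> H (peval q (jx K)) ->
                 (size p' <= size q)%N) -> p' = p)
         & direct_sum H
             (Ky_span (fun r => [/\ H r, span_I0 r & sum_S (size p).-1 r]))
             (Rmul (peval p (jx K)))]) /\
  (semisimple H ->
     direct_sum H (Ky_span (fun r => H r /\ span_I0 r)) (Rmul 0) /\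
     (forall h, H h <-> Ky_span (fun r => H r /\ span_I0 r) h)).
Proof.
move=> hH.
case: (classic (exists q : {poly K}, q != 0 /\ H (peval q (jx K)))) => [ex|nex].
  pose Q n := exists q : {poly K}, [/\ q != 0, H (peval q (jx K)) & size q = n].
  have [n [[p0 [p0nz Hp0 sp0]] nmin]] : exists n, Q n /\ forall m, Q m -> (n <= m)%N.
    apply: ex_min_prop; have [q [qnz Hq]] := ex; by exists (size q), q.
  have lc0 : lead_coef p0 != 0 by rewrite lead_coef_eq0.
  set p := (lead_coef p0)^-1 *: p0.
  have pmon : p \is monic by rewrite monicE lead_coefZ mulVf.
  have sp : size p = size p0 by rewrite size_scale // invr_eq0.
  have Hp : H (peval p (jx K)) by rewrite pevalZ; apply: liZ.
  have hmin : forall q : {poly K}, q != 0 -> H (peval q (jx K)) -> (size p <= size q)%N.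
    by move=> q qnz Hq; rewrite sp sp0; apply: nmin; exists q.
  split; last by move=> SS; exfalso; exact: (notss hH pmon Hp SS).
  move=> _; exists p; split => //; last exact: F3.
  move=> p' p'mon Hp' min'.
  have pnz : p != 0 by exact: monic_neq0.
  have p'nz : p' != 0 by exact: monic_neq0.
  have e1 : size p' = size p.
    by apply/eqP; rewrite eqn_leq (min' p pnz Hp) (hmin p' p'nz Hp').
  apply/eqP; rewrite -subr_eq0; apply/eqP.
  case: (eqVneq (p' - p) 0) => // dnz; exfalso.
  have Hd : H (peval (p' - p) (jx K)) by rewrite pevalB; apply: liB.
  have := hmin _ dnz Hd.
  have : (size (p' - p)%R <= (size p).-1)%N.
    apply/leq_sizeP => j hj; rewrite coefB.
    case: (ltngtP j (size p).-1) => h.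
    - by move: h; rewrite ltnNge hj.
    - by rewrite !nth_default ?subrr // ?e1; move: h; case: (size p) => //= k; lia.
      by rewrite h -{1}e1 -!lead_coefE (monicP pmon) (monicP p'mon) subrr.
  have : (0 < size p)%N by rewrite lt0n size_poly_eq0.
  move: (size (p' - p)%R) (size p) => a b; lia.
have hP : forall q : {poly K}, q != 0 -> ~ H (peval q (jx K)).
  by move=> q qnz Hq; apply: nex; exists q.
split; first by move=> nSS; exfalso; apply: nSS; exact: c2_ss.
move=> _; split; last exact: c2_eq.
split.
- split; [exact: Ky0 | exact: KyD | ].
  move=> r a /(c2_eq hH hP) Ha; apply/(c2_eq hH hP); exact: liM.
- split.
  + by exists 0; rewrite mul0r.
  + by move=> _ _ [s ->] [t ->]; exists (s + t); rewrite mulrDl.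
  + by move=> r _ [s ->]; exists (r * s); rewrite mulrA.
- by move=> z _ [s ->]; rewrite mulr0.
- move=> h; split.
    by move=> Hh; exists h, 0; split; [exact/(c2_eq hH hP) | exists 0; rewrite mulr0 | rewrite addr0].
  by move=> [a [b [Aa [s ->] ->]]]; rewrite mulr0 addr0; apply/(c2_eq hH hP).
Qed.
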